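(* Let $A$ be a skew brace and endow $\mathrm{Spec}\,A$ with the spectral topology. Then every irreducible closed subset of $\mathrm{Spec}\,A$ has a unique generic point.
   Context: A (left) skew brace is a triple $(A,+,\circ)$ where $(A,+)$ and $(A,\circ)$ are groups (not necessarily abelian) such that $a\circ(b+c)=a\circ b-a+a\circ c$ for all $a,b,c\in A$; the two groups share an identity element $e$. For $a\in A$ put $\lambda_a(b)=-a+a\circ b$ and define $a*b=-a+a\circ b-b$. An ideal of $A$ is a subset $I$ that is a normal subgroup of both $(A,+)$ and $(A,\circ)$ with $\lambda_a(I)\subseteq I$ for all $a\in A$. For subsets $I,J\subseteq A$ write $I*J=\{i*j\mid i\in I,j\in J\}$. A prime ideal of $A$ is a proper ideal $P\neq A$ such that for any subsets $I,J$ of $A$, $I*J\subseteq P$ implies $I\subseteq P$ or $J\subseteq P$. $\mathrm{Spec}\,A$ is the set of prime ideals of $A$. For an ideal $I$ let $H(I)=\{P\in\mathrm{Spec}\,A\mid I\subseteq P\}$; the spectral topology on $\mathrm{Spec}\,A$ is the topology whose closed sets are the sets $H(I)$, $I$ an ideal of $A$. A closed subset $S$ of a topological space is irreducible if $S$ is not the union of two closed subsets $S_1,S_2\subsetneq S$. A point $x\in S$ is a generic point of the closed set $S$ if $S=\mathrm{cl}(\{x\})$. *)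

(* Defs.v *)
(* skew braces on an arbitrary (possibly infinite) carrier type.
   Subsets of A are predicates A -> Prop; Spec A is a set of such predicates. *)

Record skew_brace := SkewBrace {
  carrier :> Type;
  add : carrier -> carrier -> carrier;
  opp : carrier -> carrier;
  zero : carrier;            (* common identity e of (A,+) and (A,o) *)
  circ : carrier -> carrier -> carrier;
  cinv : carrier -> carrier;
  addA : forall a b c, add a (add b c) = add (add a b) c;
  add0l : forall a, add zero a = a;
  add0r : forall a, add a zero = a;
  addNl : forall a, add (opp a) a = zero;
  addNr : forall a, add a (opp a) = zero;
  circA : forall a b c, circ a (circ b c) = circ (circ a b) c;
  circ0l : forall a, circ zero a = a;
  circ0r : forall a, circ a zero = a;
  circVl : forall a, circ (cinv a) a = zero;
  circVr : forall a, circ a (cinv a) = zero;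
  brace_comp : forall a b c,
    circ a (add b c) = add (add (circ a b) (opp a)) (circ a c)
}.

Section SkewBraceDefs.
Variable A : skew_brace.

Definition lam (a b : A) : A := add A (opp A a) (circ A a b).
Definition star (a b : A) : A := add A (add A (opp A a) (circ A a b)) (opp A b).

Definition subset (I J : A -> Prop) : Prop := forall x, I x -> J x.

Definition normal_add (I : A -> Prop) : Prop :=
  I (zero A) /\ (forall x y, I x -> I y -> I (add A x y)) /\
  (forall x, I x -> I (opp A x)) /\
  (forall a x, I x -> I (add A (add A a x) (opp A a))).

Definition normal_circ (I : A -> Prop) : Prop :=
  I (zero A) /\ (forall x y, I x -> I y -> I (circ A x y)) /\
  (forall x, I x -> I (cinv A x)) /\
  (forall a x, I x -> I (circ A (circ A a x) (cinv A a))).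

Definition is_ideal (I : A -> Prop) : Prop :=
  normal_add I /\ normal_circ I /\ (forall a x, I x -> I (lam a x)).

Definition star_sub (I J P : A -> Prop) : Prop :=
  forall i j, I i -> J j -> P (star i j).

Definition is_prime (P : A -> Prop) : Prop :=
  is_ideal P /\ (exists a, ~ P a) /\
  (forall I J : A -> Prop, star_sub I J P -> subset I P \/ subset J P).

Definition Hset (I : A -> Prop) : (A -> Prop) -> Prop :=
  fun P => is_prime P /\ subset I P.

Definition closed (S : (A -> Prop) -> Prop) : Prop :=
  exists I, is_ideal I /\ (forall P, S P <-> Hset I P).

Definition proper_subset (S1 S : (A -> Prop) -> Prop) : Prop :=
  (forall P, S1 P -> S P) /\ exists P, S P /\ ~ S1 P.

(* irreducible closed set (nonempty, by the standard convention) *)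
Definition irreducible (S : (A -> Prop) -> Prop) : Prop :=
  closed S /\ (exists P, S P) /\
  ~ (exists S1 S2, closed S1 /\ closed S2 /\
       proper_subset S1 S /\ proper_subset S2 S /\
       (forall P, S P <-> S1 P \/ S2 P)).

Definition closure (X : (A -> Prop) -> Prop) : (A -> Prop) -> Prop :=
  fun P => forall C, closed C -> (forall Q, X Q -> C Q) -> C P.

Definition generic_point (S : (A -> Prop) -> Prop) (x : A -> Prop) : Prop :=
  S x /\ (forall P, S P <-> closure (fun Q => Q = x) P).

End SkewBraceDefs.

(* Main.v *)
Require Import Defs.
From Stdlib Require Import Classical FunctionalExtensionality PropExtensionality.

Lemma inter_ideal (A : skew_brace) (F : (A -> Prop) -> Prop) :
  (forall K, F K -> is_ideal A K) -> is_ideal A (fun a => forall K, F K -> K a).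
Proof.
  intros H. unfold is_ideal, normal_add, normal_circ.
  repeat split; intros;
  match goal with Hk : F ?K |- _ =>
    destruct (H _ Hk) as [[a1 [a2 [a3 a4]]] [[c1 [c2 [c3 c4]]] l]] end;
  first [ assumption
        | apply a4 | apply c4 | apply l | apply a2 | apply a3 | apply c2 | apply c3 ];
  match goal with Hx : forall K, F K -> K ?z, Hk : F ?K |- ?K ?z => exact (Hx K Hk) end.
Qed.

Definition gen (A : skew_brace) (X : A -> Prop) : A -> Prop :=
  fun a => forall K, (is_ideal A K /\ subset A X K) -> K a.

Lemma gen_ideal (A : skew_brace) X : is_ideal A (gen A X).
Proof. apply inter_ideal. intros K [H _]; exact H. Qed.

Lemma gen_sub (A : skew_brace) X P : is_ideal A P ->
  (subset A (gen A X) P <-> subset A X P).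
Proof.
  intros HP; split; intros H a Ha.
  - apply H. intros K [_ HK]. apply HK, Ha.
  - apply (Ha P). split; assumption.
Qed.

Theorem theorem4p11 (A : skew_brace) (S : (A -> Prop) -> Prop) :
  irreducible A S -> exists! x : A -> Prop, generic_point A S x.
Proof.
  intros [[I [HI HS]] [[P1 HP1] Hirr]].
  set (P0 := fun a => forall P, S P -> P a).
  assert (SPr : forall P, S P -> is_prime A P) by (intros P HP; apply HS in HP; apply HP).
  assert (SI : forall P, S P -> subset A I P) by (intros P HP; apply HS in HP; apply HP).
  assert (P0sub : forall P, S P -> subset A P0 P) by (intros P HP a Ha; apply Ha, HP).
  assert (P0pr : is_prime A P0).
  { split; [|split].
    - apply inter_ideal. intros K HK. apply SPr, HK.
    - destruct (SPr _ HP1) as [_ [[a Ha] _]]. exists a. intro H. apply Ha, H, HP1.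
    - intros I' J' Hst.
      destruct (classic (subset A I' P0)) as [h1|h1]; [left; exact h1|].
      destruct (classic (subset A J' P0)) as [h2|h2]; [right; exact h2|].
      exfalso. apply Hirr.
      exists (Hset A (gen A (fun a => I a \/ I' a))), (Hset A (gen A (fun a => I a \/ J' a))).
      assert (Hcl : forall X, closed A (Hset A (gen A X))).
      { intros X. exists (gen A X). split; [apply gen_ideal| tauto]. }
      assert (Hmem : forall X P, Hset A (gen A X) P <-> is_prime A P /\ subset A X P).
      { intros X P; split; intros [Hp Hs]; split; auto;
        [apply (gen_sub A X P (proj1 Hp)) | apply (gen_sub A X P (proj1 Hp))]; auto. }
      assert (Hprop : forall K, ~ subset A K P0 -> proper_subset A (Hset A (gen A (fun a => I a \/ K a))) S).
      { intros K hK. split.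
        - intros P HP. destruct (proj1 (Hmem _ _) HP) as [Hp Hs]. apply HS. split; auto.
          intros a Ha; apply Hs; auto.
        - apply not_all_ex_not in hK. destruct hK as [i hi].
          apply imply_to_and in hi. destruct hi as [Ki hi].
          apply not_all_ex_not in hi. destruct hi as [P hP].
          apply imply_to_and in hP. destruct hP as [SP nP].
          exists P. split; auto. intro H. apply nP, (proj2 (proj1 (Hmem _ _) H)); auto. }
      split; [apply Hcl|]. split; [apply Hcl|]. split; [apply Hprop; auto|].
      split; [apply Hprop; auto|].
      intros P; split.
      + intros HP. destruct (SPr _ HP) as [_ [_ Hpr]].
        assert (Hst' : star_sub A I' J' P) by (intros i j Hi Hj; apply (P0sub _ HP), Hst; auto).
        destruct (Hpr _ _ Hst') as [h|h]; [left|right]; apply (proj2 (Hmem _ _)); split; auto;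
          intros a [Ha|Ha]; auto; apply (SI _ HP); auto.
      + intros [H|H]; destruct (proj1 (Hmem _ _) H) as [Hp Hs]; apply HS; split; auto;
          intros a Ha; apply Hs; auto. }
  assert (SP0 : S P0).
  { apply HS. split; auto. intros a Ha P HP. apply (SI _ HP), Ha. }
  assert (Hcl1 : forall x, is_prime A x -> forall y, closure A (fun Q => Q = x) y -> subset A x y).
  { intros x Hx y Hy. assert (H : Hset A x y).
    { apply Hy. exists x. split; [apply Hx| tauto].
      intros Q ->. split; auto. intros a Ha; exact Ha. }
    apply H. }
  assert (G0 : generic_point A S P0).
  { split; auto. intros P; split.
    - intros HP C [J [HJ HC]] Hx. apply HC.
      assert (HC0 : Hset A J P0) by (apply HC, Hx; reflexivity).
      split; [apply SPr, HP|]. intros a Ha. apply (P0sub _ HP), (proj2 HC0), Ha.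
    - intros H. apply H. exists I. split; auto. intros Q ->. exact SP0. }
  exists P0. split; auto.
  intros y [Sy Hy].
  assert (h1 : subset A P0 y) by (apply Hcl1; auto; apply (proj2 G0 y), Sy).
  assert (h2 : subset A y P0) by (apply (Hcl1 y (SPr _ Sy)); apply Hy, SP0).
  apply functional_extensionality. intro a. apply propositional_extensionality. split; auto.
Qed.
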